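(* Let $F:\mathbb{R}^p\to\mathbb{R}^p$ be single-valued with $\mathrm{zer}\,F\neq\emptyset$, $L$-Lipschitz continuous, and suppose there exist $x^\star\in\mathrm{zer}\,F$ and $\rho\ge0$ such that $\langle Fx,x-x^\star\rangle\ge-\rho\|Fx\|^2$ for all $x\in\mathrm{dom}\,F$. Let $\kappa_1,\kappa_2\ge0$, $\beta\in(0,1]$, $\eta>0$, and let $\{(x^k,y^k)\}$ be generated by: start from $x^0\in\mathrm{dom}\,F$, set $x^{-1}=y^{-1}:=x^0$, and for $k\ge0$ $$y^k:=x^k-\tfrac{\eta}{\beta}u^k,\qquad x^{k+1}:=x^k-\eta Fy^k,$$ where $u^k\in\mathbb{R}^p$ satisfies $\|Fx^k-u^k\|^2\le\kappa_1\|Fx^k-Fy^{k-1}\|^2+\kappa_2\|Fx^k-Fx^{k-1}\|^2$. For $\gamma>0$ and $r>0$ define $$\mathcal{P}_k:=\|x^k-x^\star\|^2+\tfrac{\kappa_1(1+r)L^2\eta^2}{r\gamma}\|x^k-y^{k-1}\|^2+\tfrac{\kappa_2(1+r)L^2\eta^2}{r\gamma}\|x^k-x^{k-1}\|^2.$$ Then for any $s>0$, $\mu\in[0,1]$ and $k\ge0$, $$\begin{aligned}\mathcal{P}_{k+1}\le{}&\mathcal{P}_k-\Big(\beta-\tfrac{(1+r)L^2\eta^2}{\gamma}-\tfrac{2\mu\rho(1+s)}{s\eta}\Big)\|y^k-x^k\|^2\\&-\Big(\beta-\gamma-\tfrac{\kappa_1(1+r)L^2\eta^2}{r\gamma}-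\tfrac{2\mu\rho(1+s)}{\eta}\Big)\|x^{k+1}-y^k\|^2\\&-\Big(1-\beta-\tfrac{\kappa_2(1+r)L^2\eta^2}{r\gamma}-\tfrac{2(1-\mu)\rho}{\eta}\Big)\|x^{k+1}-x^k\|^2.\end{aligned}$$
   Context: $\mathrm{zer}\,F:=\{x:Fx=0\}$. $F$ is $L$-Lipschitz if $\|Fx-Fy\|\le L\|x-y\|$ for all $x,y\in\mathrm{dom}\,F$. *)

(* Defs.v *)
From HB Require Import structures.
From mathcomp Require Import all_boot all_order all_algebra.
From mathcomp Require Import reals.
Set Implicit Arguments. Unset Strict Implicit. Unset Printing Implicit Defensive.
Import Order.TTheory GRing.Theory Num.Theory.
Local Open Scope ring_scope.

Definition dotp (R : realType) (p : nat) (x y : 'rV[R]_p) : R :=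
  \sum_(i < p) x 0 i * y 0 i.

Definition nrm2 (R : realType) (p : nat) (x : 'rV[R]_p) : R := dotp x x.
Definition nrm (R : realType) (p : nat) (x : 'rV[R]_p) : R := Num.sqrt (nrm2 x).

Definition zer (R : realType) (p : nat) (F : 'rV[R]_p -> 'rV[R]_p) : 'rV[R]_p -> Prop :=
  fun x => F x = 0.

(* F is L-Lipschitz on dom F = R^p *)
Definition Lipschitz (R : realType) (p : nat) (F : 'rV[R]_p -> 'rV[R]_p) (L : R) : Prop :=
  forall x y, nrm (F x - F y) <= L * nrm (x - y).

(* x^{k-1} with the convention x^{-1} := x^0 *)
Definition xprev (R : realType) (p : nat) (x : nat -> 'rV[R]_p) (k : nat) : 'rV[R]_p :=
  x k.-1.
(* y^{k-1} with the convention y^{-1} := x^0 *)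
Definition yprev (R : realType) (p : nat) (x y : nat -> 'rV[R]_p) (k : nat) : 'rV[R]_p :=
  if k is k'.+1 then y k' else x 0%N.

Definition Pk (R : realType) (p : nat) (x y : nat -> 'rV[R]_p) (xstar : 'rV[R]_p)
  (kappa1 kappa2 L eta gamma r : R) (k : nat) : R :=
  nrm2 (x k - xstar)
  + kappa1 * (1 + r) * L ^+ 2 * eta ^+ 2 / (r * gamma) * nrm2 (x k - yprev x y k)
  + kappa2 * (1 + r) * L ^+ 2 * eta ^+ 2 / (r * gamma) * nrm2 (x k - xprev x k).

(* Main.v *)
Require Import Defs.
From HB Require Import structures.
From mathcomp Require Import all_boot all_order all_algebra.
From mathcomp Require Import reals ring lra.
Import Order.TTheory GRing.Theory Num.Theory.
Local Open Scope ring_scope.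

Set Implicit Arguments.
Section S.
Variables (R : realType) (p : nat).
Implicit Types (a e f V W : 'rV[R]_p).

Definition G a e f (p1 p2 p3 q1 q2 q3 : R) :=
  p1*q1*dotp a a + p2*q2*dotp e e + p3*q3*dotp f f + (p1*q2+p2*q1)*dotp a e
  + (p1*q3+p3*q1)*dotp a f + (p2*q3+p3*q2)*dotp e f.

Lemma gram a e f p1 p2 p3 q1 q2 q3 :
  dotp (p1*:a + p2*:e + p3*:f) (q1*:a + q2*:e + q3*:f) = G a e f p1 p2 p3 q1 q2 q3.
Proof.
rewrite /G /dotp !mulr_sumr -!big_split /=; apply: eq_bigr => i _; rewrite !mxE; ring.
Qed.

Lemma dotp_lc a e f p1 p2 p3 q1 q2 q3 V W :
  V = p1*:a + p2*:e + p3*:f -> W = q1*:a + q2*:e + q3*:f ->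
  dotp V W = G a e f p1 p2 p3 q1 q2 q3.
Proof. by move=> -> ->; rewrite gram. Qed.

Lemma nrm2_lc a e f p1 p2 p3 V :
  V = p1*:a + p2*:e + p3*:f -> nrm2 V = G a e f p1 p2 p3 p1 p2 p3.
Proof. by move=> ->; rewrite /nrm2 gram. Qed.

Lemma nrm2_ge0 V : 0 <= nrm2 V.
Proof. by rewrite /nrm2 /dotp; apply: sumr_ge0 => i _; rewrite -expr2 sqr_ge0. Qed.

Lemma young a e (t : R) : 0 < t ->
  nrm2 (a + e) <= (1 + t) * nrm2 a + (1 + 1/t) * nrm2 e.
Proof.
move=> ht.
have h0 := nrm2_ge0 (t*:a - e).
rewrite (@nrm2_lc a e 0 t (-1) 0) in h0; last first.
  by apply/rowP => i; rewrite !mxE; ring.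
rewrite (@nrm2_lc a e 0 1 1 0); last by apply/rowP => i; rewrite !mxE; ring.
rewrite (@nrm2_lc a 0 0 1 0 0 (a)); last by apply/rowP => i; rewrite !mxE; ring.
rewrite (@nrm2_lc 0 e 0 0 1 0 (e)); last by apply/rowP => i; rewrite !mxE; ring.
rewrite -subr_ge0.
have -> : (1 + t) * G a 0 0 1 0 0 1 0 0 + (1 + 1 / t) * G 0 e 0 0 1 0 0 1 0 -
    G a e 0 1 1 0 1 1 0 = 1/t * G a e 0 t (-1) 0 t (-1) 0.
  rewrite /G; field; by rewrite gt_eqF.
by apply: mulr_ge0 => //; rewrite divr_ge0 // ltW.
Qed.

Lemma lip2 (F : 'rV[R]_p -> 'rV[R]_p) L a e :
  Lipschitz F L -> nrm2 (F a - F e) <= L ^+ 2 * nrm2 (a - e).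
Proof.
move=> /(_ a e) h.
have h0 : 0 <= nrm (F a - F e) := sqrtr_ge0 _.
have := ler_pM h0 h0 h h.
by rewrite mulrACA -!expr2 /nrm !sqr_sqrtr // nrm2_ge0.
Qed.
End S.
Unset Implicit Arguments.
Theorem lemma2 (R : realType) (p : nat) (F : 'rV[R]_p -> 'rV[R]_p) (L : R)
  (xstar : 'rV[R]_p) (rho kappa1 kappa2 beta eta : R)
  (x y u : nat -> 'rV[R]_p) :
  (exists z, zer F z) ->
  Lipschitz F L ->
  zer F xstar ->
  0 <= rho ->
  (forall z, dotp (F z) (z - xstar) >= - rho * nrm2 (F z)) ->
  0 <= kappa1 -> 0 <= kappa2 ->
  0 < beta -> beta <= 1 ->
  0 < eta ->
  (forall k, y k = x k - (eta / beta) *: u k) ->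
  (forall k, x k.+1 = x k - eta *: F (y k)) ->
  (forall k, nrm2 (F (x k) - u k)
             <= kappa1 * nrm2 (F (x k) - F (yprev x y k))
                + kappa2 * nrm2 (F (x k) - F (xprev x k))) ->
  forall (gamma r s mu : R), 0 < gamma -> 0 < r -> 0 < s -> 0 <= mu -> mu <= 1 ->
  forall k : nat,
    Pk x y xstar kappa1 kappa2 L eta gamma r k.+1
    <= Pk x y xstar kappa1 kappa2 L eta gamma r k
       - (beta - (1 + r) * L ^+ 2 * eta ^+ 2 / gamma
               - 2 * mu * rho * (1 + s) / (s * eta)) * nrm2 (y k - x k)
       - (beta - gamma - kappa1 * (1 + r) * L ^+ 2 * eta ^+ 2 / (r * gamma)
               - 2 * mu * rho * (1 + s) / eta) * nrm2 (x k.+1 - y k)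
       - (1 - beta - kappa2 * (1 + r) * L ^+ 2 * eta ^+ 2 / (r * gamma)
               - 2 * (1 - mu) * rho / eta) * nrm2 (x k.+1 - x k).
Proof.
move=> _ HL Hz Hr HM Hk1 Hk2 Hb Hb1 He Hy Hx Hu gamma r s mu Hg Hr0 Hs Hmu Hmu1 k.
have eY : yprev x y k.+1 = y k by [].
have eX : xprev x k.+1 = x k by [].
rewrite /Pk eY eX.
have hne : eta != 0 by rewrite gt_eqF.
have hbe : beta != 0 by rewrite gt_eqF.
have hxi : forall i, x k.+1 0 i = x k 0 i - eta * F (y k) 0 i.
  by move=> i; rewrite Hx !mxE.
have hyi : forall i, y k 0 i = x k 0 i - eta/beta * u k 0 i.
  by move=> i; rewrite Hy !mxE.
pose A := x k - xstar; pose E := x k.+1 - y k; pose Ff := y k - x k.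
have g1 := @nrm2_lc R p A E Ff 1 1 1 (x k.+1 - xstar)
  ltac:(by apply/rowP => i; rewrite /A /E /Ff !mxE; ring).
have g2 := @nrm2_lc R p A E Ff 0 1 0 (x k.+1 - y k)
  ltac:(by apply/rowP => i; rewrite /A /E /Ff !mxE; ring).
have g3 := @nrm2_lc R p A E Ff 0 1 1 (x k.+1 - x k)
  ltac:(by apply/rowP => i; rewrite /A /E /Ff !mxE; ring).
have g4 := @nrm2_lc R p A E Ff 1 0 0 (x k - xstar)
  ltac:(by apply/rowP => i; rewrite /A /E /Ff !mxE; ring).
have g5 := @nrm2_lc R p A E Ff 0 0 1 (y k - x k)
  ltac:(by apply/rowP => i; rewrite /A /E /Ff !mxE; ring).
have g6 := @dotp_lc R p A E Ff 0 (-1/eta) (-1/eta) 1 0 1 (F (y k)) (y k - xstar)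
  ltac:(by apply/rowP => i; rewrite /A /E /Ff !mxE hxi; field; rewrite ?hne ?hbe)
  ltac:(by apply/rowP => i; rewrite /A /E /Ff !mxE; ring).
have g7 := @nrm2_lc R p A E Ff 0 (-1/eta) (-1/eta) (F (y k))
  ltac:(by apply/rowP => i; rewrite /A /E /Ff !mxE hxi; field; rewrite ?hne ?hbe).
have g8 := @nrm2_lc R p A E Ff 0 s (-1) (s *: (x k.+1 - y k) - (y k - x k))
  ltac:(by apply/rowP => i; rewrite /A /E /Ff !mxE; ring).
have g9 := @nrm2_lc R p A E Ff 0 (gamma - 1) (beta - 1)
  (eta *: (F (y k) - u k) + gamma *: (x k.+1 - y k))
  ltac:(by apply/rowP => i; rewrite /A /E /Ff !mxE hxi hyi; field; rewrite ?hne ?hbe).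
have g10 := @nrm2_lc R p A E Ff 0 (-1/eta) ((beta - 1)/eta) (F (y k) - u k)
  ltac:(by apply/rowP => i; rewrite /A /E /Ff !mxE hxi hyi; field; rewrite ?hne ?hbe).
have hM : 0 <= dotp (F (y k)) (y k - xstar) + rho * nrm2 (F (y k)).
  by have := HM (y k); rewrite -subr_ge0 mulNr opprK.
have hS := @nrm2_ge0 R p (s *: (x k.+1 - y k) - (y k - x k)).
have hG := @nrm2_ge0 R p (eta *: (F (y k) - u k) + gamma *: (x k.+1 - y k)).
have hR : 0 <= (1 + r) * nrm2 (F (y k) - F (x k)) + (1 + 1/r) * nrm2 (F (x k) - u k)
   - nrm2 (F (y k) - u k).
  by have := @young R p (F (y k) - F (x k)) (F (x k) - u k) r Hr0; rewrite addrA subrK subr_ge0.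
have hL1 : 0 <= L ^+ 2 * nrm2 (y k - x k) - nrm2 (F (y k) - F (x k)).
  by rewrite subr_ge0 (@lip2 R p F L).
have hL2 : 0 <= L ^+ 2 * nrm2 (x k - yprev x y k) - nrm2 (F (x k) - F (yprev x y k)).
  by rewrite subr_ge0 (@lip2 R p F L).
have hL3 : 0 <= L ^+ 2 * nrm2 (x k - xprev x k) - nrm2 (F (x k) - F (xprev x k)).
  by rewrite subr_ge0 (@lip2 R p F L).
have hU : 0 <= kappa1 * nrm2 (F (x k) - F (yprev x y k))
                + kappa2 * nrm2 (F (x k) - F (xprev x k)) - nrm2 (F (x k) - u k).
  by rewrite subr_ge0 Hu.
have hr1 : 0 <= 1 + 1/r by rewrite addr_ge0 // divr_ge0 // ltW.
have hC : 0 <= 2 * eta * (dotp (F (y k)) (y k - xstar) + rho * nrm2 (F (y k)))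
   + 2 * mu * rho / (eta * s) * nrm2 (s *: (x k.+1 - y k) - (y k - x k))
   + 1 / gamma * nrm2 (eta *: (F (y k) - u k) + gamma *: (x k.+1 - y k))
   + eta ^+ 2 / gamma * ((1 + r) * nrm2 (F (y k) - F (x k)) + (1 + 1/r) * nrm2 (F (x k) - u k)
   - nrm2 (F (y k) - u k))
   + (1 + r) * eta ^+ 2 / gamma * (L ^+ 2 * nrm2 (y k - x k) - nrm2 (F (y k) - F (x k)))
   + (1 + 1/r) * eta ^+ 2 / gamma * (kappa1 * nrm2 (F (x k) - F (yprev x y k))
                + kappa2 * nrm2 (F (x k) - F (xprev x k)) - nrm2 (F (x k) - u k))
   + kappa1 * (1 + 1/r) * eta ^+ 2 / gamma * (L ^+ 2 * nrm2 (x k - yprev x y k) - nrm2 (F (x k) - F (yprev x y k)))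
   + kappa2 * (1 + 1/r) * eta ^+ 2 / gamma * (L ^+ 2 * nrm2 (x k - xprev x k) - nrm2 (F (x k) - F (xprev x k))).
  have hg0 : 0 <= gamma by apply: ltW.
  have he0 : 0 <= eta by apply: ltW.
  have hs0 : 0 <= s by apply: ltW.
  rewrite !addr_ge0 // !mulr_ge0 // ?divr_ge0 // ?mulr_ge0 // ?addr_ge0 // ?sqr_ge0 // ?invr_ge0 ?mulr_ge0 // ?ltW //.
rewrite -subr_ge0; apply: (le_trans hC); rewrite le_eqVlt; apply/orP; left; apply/eqP.
rewrite g9 g10 g1 g2 g3 g4 g5 g6 g7 g8 /G.
field; rewrite hne !gt_eqF //.

Qed.
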